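(* Let $A,B\in\mathbb R^{n\times n}$ with $A$ Lyapunov regular and $B\in\mathcal C_{\mathcal L}(A)\cap\{A\}''_{\mathbb R}$, with $L_R,M_R$ as in the context (all over $\mathbb R$). Suppose $S\in\mathbb R^{(m+1)\times(m+1)}$ satisfies $S^T=-S$ and $(S\otimes I_n)L_R=M_R$ for all $R\in\mathbb R^{n\times n}$. Write $S=\begin{bmatrix}0&\ell\\-\ell^T&-M\end{bmatrix}$ with $\ell\in\mathbb R^{1\times m}$ and $M=-M^T\in\mathbb R^{m\times m}$, and set $f(z)=\ell(zI_m-M)^{-1}\ell^T$. Then $f\in\mathcal{PRO}$ and $f(A)=B$.
   Context: $\otimes$ Kronecker product. $\mathcal{PRO}$ is the class of real rational functions $f$ with $\operatorname{Re}f(z)\ge0$ for $\operatorname{Re}z>0$ and $f(-\bar z)^*=-f(z)$; for a real rational $f$ and a matrix $A$ without eigenvalues at poles of $f$, $f(A)$ is the usual functional calculus. $A$ Lyapunov regular: eigenvalues satisfy $\lambda_i+\bar\lambda_j\ne0$. $\mathcal L_Y(X)=XY+Y^TX$, $\mathcal L_{A,B}=\mathcal L_B\circ\mathcal L_A^{-1}$ on $\mathbb R^{n\times n}$. $\{A\}''_{\mathbb R}$ bicommutant of $A$ in $\mathbb R^{n\times n}$; $\overline{\mathcal H}(A)=\{H\text{ symmetric}:HA+A^TH\succeq0\}$, $\mathcal C_{\mathcal L}(A)=\{B:\overline{\mathcal H}(A)\subseteq\overline{\mathcal H}(B)\}$. Let $\mathcal L_{A,B}(V)=\sum_{k,l=1}^m\mathbb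 H_{kl}C_kVC_l^T$ be a minimal (smallest possible $m$) real Hill representation with Hill matrix $\mathbb H$; under the hypotheses $\mathbb H$ is positive definite; fix invertible $P\in\mathbb R^{m\times m}$ with $\mathbb H=P^TP$. Set $\mathbf C=\begin{bmatrix}C_1^T\\\vdots\\C_m^T\end{bmatrix}$, $L_R=\begin{bmatrix}R\\(P\otimes R)\mathbf C\end{bmatrix}$, $M_R=\begin{bmatrix}RB\\-(P\otimes RA)\mathbf C\end{bmatrix}$. *)

(* Defs.v *)
From HB Require Import structures.
From mathcomp Require Import all_boot all_order all_algebra.
From mathcomp Require Import complex mxtens.
From mathcomp Require Import reals.

Set Implicit Arguments.
Unset Strict Implicit.
Unset Printing Implicit Defensive.

Import Order.TTheory GRing.Theory Num.Theory.
Local Open Scope ring_scope.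
Local Open Scope complex_scope.

Section Defs.
Variable R : realType.
Local Notation C := R[i].

Definition cmx {p q} (A : 'M[R]_(p, q)) : 'M[C]_(p, q) := map_mx (fun x => x%:C) A.
Definition cpoly (p : {poly R}) : {poly C} := map_poly (fun x => x%:C) p.

Definition lyap_regular n (A : 'M[R]_n) : Prop :=
  forall lam mu : C, eigenvalue (cmx A) lam -> eigenvalue (cmx A) mu ->
    lam + mu^* != 0.

Definition Lyap n (Y X : 'M[R]_n) : 'M[R]_n := X *m Y + Y^T *m X.

(* L_{A,B} = L_B o L_A^{-1}, via the matrices representing these linear maps
   on vectorized n x n matrices *)
Definition LAB n (A B V : 'M[R]_n) : 'M[R]_n :=
  vec_mx (mxvec V *m invmx (lin_mx (Lyap A)) *m lin_mx (Lyap B)).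

Definition symmetric n (H : 'M[R]_n) : Prop := H^T = H.
Definition psd n (H : 'M[R]_n) : Prop :=
  forall x : 'cV[R]_n, 0 <= (x^T *m H *m x) 0 0.

Definition bicommutant n (A B : 'M[R]_n) : Prop :=
  forall X : 'M[R]_n, X *m A = A *m X -> X *m B = B *m X.

Definition Hbar n (A H : 'M[R]_n) : Prop := symmetric H /\ psd (Lyap A H).

Definition CL n (A B : 'M[R]_n) : Prop := forall H, Hbar A H -> Hbar B H.

Definition hill_rep n (A B : 'M[R]_n) m (H : 'M[R]_m) (Cs : 'I_m -> 'M[R]_n) :=
  symmetric H /\
  forall V : 'M[R]_n,
    LAB A B V = \sum_(k < m) \sum_(l < m) H k l *: (Cs k *m V *m (Cs l)^T).

Definition minimal_hill_rep n (A B : 'M[R]_n) m (H : 'M[R]_m)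
  (Cs : 'I_m -> 'M[R]_n) :=
  hill_rep A B H Cs /\
  forall m' (H' : 'M[R]_m') (Cs' : 'I_m' -> 'M[R]_n), hill_rep A B H' Cs' -> (m <= m')%N.

(* bold C = [C_1^T; ...; C_m^T] : (m n) x n *)
Definition Cstack n m (Cs : 'I_m -> 'M[R]_n) : 'M[R]_(m * n, n) :=
  \matrix_(i, j) (Cs (mxtens_unindex i).1)^T (mxtens_unindex i).2 j.

Lemma kron_dim m n : ((1 + m) * n = n + m * n)%N.
Proof. by rewrite mulnDl mul1n. Qed.

Definition LR n m (P : 'M[R]_m) (Cs : 'I_m -> 'M[R]_n) (Rm : 'M[R]_n)
  : 'M[R]_((1 + m) * n, n) :=
  castmx (esym (kron_dim m n), erefl n) (col_mx Rm ((P *t Rm) *m Cstack Cs)).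

Definition MR n m (A B : 'M[R]_n) (P : 'M[R]_m) (Cs : 'I_m -> 'M[R]_n)
  (Rm : 'M[R]_n) : 'M[R]_((1 + m) * n, n) :=
  castmx (esym (kron_dim m n), erefl n)
    (col_mx (Rm *m B) (- ((P *t (Rm *m A)) *m Cstack Cs))).

Definition PRO_rat (p q : {poly R}) : Prop :=
  q != 0 /\
  (forall z : C, 0 < Re z -> (cpoly q).[z] != 0 ->
     0 <= Re ((cpoly p).[z] / (cpoly q).[z])) /\
  (forall z : C, (cpoly q).[z] != 0 -> (cpoly q).[- z^*] != 0 ->
     ((cpoly p).[- z^*] / (cpoly q).[- z^*])^* = - ((cpoly p).[z] / (cpoly q).[z])).

Definition rat_represents (f : C -> C) (dom : C -> Prop) (p q : {poly R}) :=
  q != 0 /\ forall z, dom z -> (cpoly q).[z] != 0 -> f z = (cpoly p).[z] / (cpoly q).[z].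

Definition in_PRO (f : C -> C) (dom : C -> Prop) : Prop :=
  exists p q, rat_represents f dom p q /\ PRO_rat p q.

Definition peval_mx n (A : 'M[R]_n) (p : {poly R}) : 'M[R]_n :=
  \sum_(i < size p) p`_i *: iter i (mulmx A) 1%:M.

(* f(A) = B via the functional calculus f(A) = p(A) q(A)^{-1}
   (A has no eigenvalue at a pole of f) *)
Definition rat_at_matrix (f : C -> C) (dom : C -> Prop) n (A B : 'M[R]_n) : Prop :=
  exists p q, rat_represents f dom p q /\ peval_mx A q \in unitmx /\
    peval_mx A p *m invmx (peval_mx A q) = B.

Definition fLM m (l : 'M[R]_(1, m)) (M : 'M[R]_m) (z : C) : C :=
  (cmx l *m invmx (z%:M - cmx M) *m (cmx l)^T) 0 0.
Definition domLM m (M : 'M[R]_m) (z : C) : Prop := (z%:M - cmx M) \in unitmx.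

End Defs.

(* Main.v *)
Require Import Defs.
From HB Require Import structures.
From mathcomp Require Import all_boot all_order all_algebra.
From mathcomp Require Import complex mxtens.
From mathcomp Require Import reals.
From mathcomp Require Import zify ring.

Import Order.TTheory GRing.Theory Num.Theory.
Local Open Scope ring_scope.

Set Implicit Arguments. Unset Strict Implicit. Unset Printing Implicit Defensive.


Section Gen.
Variable K : comNzRingType.

Definition pw {k} (A : 'M[K]_k) i := iter i (mulmx A) 1%:M.
Definition gpeval {k} (A : 'M[K]_k) (p : {poly K}) :=
  \sum_(i < size p) p`_i *: pw A i.

Lemma pwS k (A : 'M[K]_k) i : pw A i.+1 = A *m pw A i. Proof. by []. Qed.
Lemma pw0 k (A : 'M[K]_k) : pw A 0 = 1%:M. Proof. by []. Qed.
Lemma pwSr k (A : 'M[K]_k) i : pw A i.+1 = pw A i *m A.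
Proof.
elim: i => [|i IH]; first by rewrite pwS !pw0 mulmx1 mul1mx.
by rewrite [LHS]pwS {1}IH mulmxA -pwS.
Qed.
Lemma pwD k (A : 'M[K]_k) i j : pw A (i + j) = pw A i *m pw A j.
Proof.
elim: i => [|i IH]; first by rewrite add0n pw0 mul1mx.
by rewrite addSn pwS IH mulmxA -pwS.
Qed.
Lemma pw_comm k (A : 'M[K]_k) i j : pw A i *m pw A j = pw A j *m pw A i.
Proof. by rewrite -!pwD addnC. Qed.

Lemma gpeval_wid k (A : 'M[K]_k) (p : {poly K}) N : (size p <= N)%N ->
  gpeval A p = \sum_(i < N) p`_i *: pw A i.
Proof.
move=> hN; rewrite /gpeval (big_ord_widen N (fun i => p`_i *: pw A i)) //.
rewrite big_mkcond; apply: eq_bigr => i _; case: ifP => // /negbT.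
by rewrite -leqNgt => h; rewrite nth_default // scale0r.
Qed.

Lemma gpevalD k (A : 'M[K]_k) (p q : {poly K}) : gpeval A (p + q) = gpeval A p + gpeval A q.
Proof.
rewrite (@gpeval_wid _ _ _ (maxn (size p) (size q))); last exact: size_polyD.
rewrite (@gpeval_wid _ _ p (maxn (size p) (size q))) ?leq_maxl //.
rewrite (@gpeval_wid _ _ q (maxn (size p) (size q))) ?leq_maxr //.
by rewrite -big_split; apply: eq_bigr => i _; rewrite coefD scalerDl.
Qed.

Lemma gpeval0 k (A : 'M[K]_k) : gpeval A 0 = 0.
Proof. by rewrite /gpeval size_poly0 big_ord0. Qed.

Lemma gpevalZ k (A : 'M[K]_k) c (p : {poly K}) : gpeval A (c *: p) = c *: gpeval A p.
Proof.
rewrite (@gpeval_wid _ _ _ (size p)); last exact: size_scale_leq.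
by rewrite /gpeval scaler_sumr; apply: eq_bigr => i _; rewrite coefZ scalerA.
Qed.

Lemma gpeval_sum k (A : 'M[K]_k) N (F : 'I_N -> {poly K}) :
  gpeval A (\sum_(i < N) F i) = \sum_(i < N) gpeval A (F i).
Proof.
elim/big_rec2: _ => [|i y p _ <-]; first exact: gpeval0.
by rewrite gpevalD.
Qed.

Lemma gpevalXn k (A : 'M[K]_k) j : gpeval A 'X^j = pw A j.
Proof.
rewrite /gpeval size_polyXn big_ord_recr /= coefXn eqxx scale1r big1 ?add0r //.
by move=> i _; rewrite coefXn eq_sym (gtn_eqF (ltn_ord i)) scale0r.
Qed.

Lemma pw_horner k (A : 'M[K]_k.+1) i : pw A i = A ^+ i.
Proof. by elim: i => [|i IH]; rewrite ?expr0 // pwS IH exprS. Qed.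

Lemma gpeval_horner k (A : 'M[K]_k.+1) (p : {poly K}) : gpeval A p = horner_mx A p.
Proof.
rewrite -{2}(coefK p) poly_def rmorph_sum /gpeval; apply: eq_bigr => i _.
by rewrite -[RHS]/(horner_mx A _) horner_mxZ rmorphXn /= horner_mx_X pw_horner.
Qed.

Lemma gpeval_CH k (N : 'M[K]_k) : gpeval N (char_poly N) = 0.
Proof.
case: k N => [|k] N; first by rewrite flatmx0 [RHS]flatmx0.
by rewrite gpeval_horner Cayley_Hamilton.
Qed.

Lemma gpeval_comm k (A : 'M[K]_k) (p q : {poly K}) :
  gpeval A p *m gpeval A q = gpeval A q *m gpeval A p.
Proof.
rewrite /gpeval !mulmx_suml; under eq_bigr do rewrite mulmx_sumr.
rewrite exchange_big /=; apply: eq_bigr => i _; rewrite mulmx_sumr.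
apply: eq_bigr => j _.
by rewrite -!scalemxAl -!scalemxAr pw_comm !scalerA mulrC.
Qed.

Lemma sylv p k r (A : 'M[K]_p) (X : 'M[K]_(p, k)) (v : 'M[K]_(p, r))
  (L : 'M[K]_(r, k)) (N : 'M[K]_k) :
  A *m X = v *m L + X *m N -> forall i,
  pw A i *m X = \sum_(a < i) pw A (i.-1 - a) *m v *m L *m pw N a + X *m pw N i.
Proof.
move=> hX; elim=> [|i IH]; first by rewrite big_ord0 add0r pw0 mul1mx mulmx1.
rewrite pwSr -mulmxA hX mulmxDr mulmxA mulmxA -(mulmxA (pw A i)) IH.
rewrite mulmxDl mulmx_suml -mulmxA -pwSr big_ord_recl /= subn0 addrA; congr (_ + _).
  rewrite mulmxA mulmx1; congr (_ + _); apply: eq_bigr => a _.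
  rewrite add0n -pwS pwSr !mulmxA; congr (pw A _ *m _ *m _ *m _ *m _).
  rewrite /bump /=; lia.

Qed.

Lemma sylv_eval p k r (A : 'M[K]_p) (X : 'M[K]_(p, k)) (v : 'M[K]_(p, r))
  (L : 'M[K]_(r, k)) (N : 'M[K]_k) (q : {poly K}) :
  A *m X = v *m L + X *m N -> gpeval N q = 0 ->
  gpeval A q *m X = \sum_(i < size q) q`_i *:
     \sum_(a < i) pw A (i.-1 - a) *m v *m L *m pw N a.
Proof.
move=> hX hq; rewrite /gpeval mulmx_suml.
transitivity (\sum_(i < size q) q`_i *: (\sum_(a < i) pw A (i.-1 - a) *m v *m L *m pw N a
   + X *m pw N i)).
  by apply: eq_bigr => i _; rewrite -scalemxAl (sylv hX).
under eq_bigr do rewrite scalerDr. rewrite big_split /=.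
have -> : \sum_(i < size q) q`_i *: (X *m pw N i) = X *m gpeval N q.
  by rewrite /gpeval mulmx_sumr; apply: eq_bigr => i _; rewrite scalemxAr.
by rewrite hq mulmx0 addr0.
Qed.
End Gen.


Section Ext.
Variable R : realType.

Lemma sum_idx a b (F : 'I_(a * b) -> R) :
  \sum_(r < a * b) F r = \sum_(i < a) \sum_(j < b) F (mxtens_index (i, j)).
Proof.
rewrite pair_big /= (reindex (@mxtens_index a b)) /=.
  by apply: eq_bigr => -[x y].
by exists (@mxtens_unindex a b) => x _; rewrite (mxtens_indexK, mxtens_unindexK).
Qed.

Lemma tens_mul_entry a b p (T1 : 'M[R]_a) (T2 : 'M[R]_b) (E : 'M[R]_(a * b, p)) i j c :
  ((T1 *t T2) *m E) (mxtens_index (i, j)) c =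
  \sum_(i' < a) \sum_(j' < b) T1 i i' * T2 j j' * E (mxtens_index (i', j')) c.
Proof.
rewrite mxE sum_idx; apply: eq_bigr => i' _; apply: eq_bigr => j' _.
by rewrite tensmxE.
Qed.

Lemma cast_top n m p (X : 'M[R]_(n, p)) (Y : 'M[R]_(m * n, p)) j c :
  castmx (esym (kron_dim m n), erefl p) (col_mx X Y)
    (mxtens_index ((ord0 : 'I_(1 + m)), j)) c = X j c.
Proof.
rewrite castmxE /= cast_ord_id.
have -> : cast_ord (esym (esym (kron_dim m n))) (mxtens_index ((ord0 : 'I_(1 + m)), j))
  = lshift (m * n) j by apply: val_inj => /=; rewrite mul0n add0n.
by rewrite col_mxEu.
Qed.

Lemma cast_bot n m p (X : 'M[R]_(n, p)) (Y : 'M[R]_(m * n, p)) k j c :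
  castmx (esym (kron_dim m n), erefl p) (col_mx X Y)
    (mxtens_index ((lift ord0 k : 'I_(1 + m)), j)) c = Y (mxtens_index (k, j)) c.
Proof.
rewrite castmxE /= cast_ord_id.
have -> : cast_ord (esym (esym (kron_dim m n))) (mxtens_index ((lift ord0 k : 'I_(1 + m)), j))
  = rshift n (mxtens_index (k, j)) by apply: val_inj => /=; rewrite /bump /=; lia.
by rewrite col_mxEd.
Qed.

Section Blk.
Variables (m : nat) (a : 'M[R]_1) (b : 'M[R]_(1, m)) (c : 'M[R]_(m, 1)) (d : 'M[R]_m).
Let S : 'M[R]_(1 + m) := block_mx a b c d.
Lemma ord0E : (ord0 : 'I_(1 + m)) = lshift m ord0. Proof. exact: val_inj. Qed.
Lemma liftE k : (lift ord0 k : 'I_(1 + m)) = rshift 1 k. Proof. exact: val_inj. Qed.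
Lemma blk00 : S ord0 ord0 = a 0 0. Proof. by rewrite /S ord0E block_mxEul. Qed.
Lemma blk0l k : S ord0 (lift ord0 k) = b 0 k. Proof. by rewrite /S liftE ord0E block_mxEur. Qed.
Lemma blkl0 k : S (lift ord0 k) ord0 = c k 0. Proof. by rewrite /S liftE ord0E block_mxEdl. Qed.
Lemma blkll k k' : S (lift ord0 k) (lift ord0 k') = d k k'. Proof. by rewrite /S !liftE block_mxEdr. Qed.
End Blk.

Lemma extract n m (A B : 'M[R]_n) (P : 'M[R]_m) (Cs : 'I_m -> 'M[R]_n)
  (S : 'M[R]_(1 + m)) (l : 'M[R]_(1, m)) (M : 'M[R]_m) :
  (forall Rm : 'M[R]_n, (S *t (1%:M : 'M[R]_n)) *m LR P Cs Rm = MR A B P Cs Rm) ->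
  S = block_mx 0 l (- l^T) (- M) ->
  let D := (P *t (1%:M : 'M[R]_n)) *m Cstack Cs in
  (forall j c, B j c = \sum_(k < m) l 0 k * D (mxtens_index (k, j)) c) /\
  (forall k j c, \sum_(j' < n) A j j' * D (mxtens_index (k, j')) c =
     l 0 k * (1%:M : 'M[R]_n) j c + \sum_(k' < m) M k k' * D (mxtens_index (k', j)) c).
Proof.
move=> hS hSb D; have h1 := hS 1%:M.
have hP : P *t (1%:M *m A) *m Cstack Cs = ((1%:M : 'M[R]_m) *t A) *m D.
  by rewrite /D mulmxA tensmx_mul mul1mx mulmx1 mul1mx.
have key : forall i j c, \sum_(i' < 1 + m) S i i' * LR P Cs 1%:M (mxtens_index (i', j)) c
   = MR A B P Cs 1%:M (mxtens_index (i, j)) c.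
  move=> i j c; rewrite -h1 tens_mul_entry; apply: eq_bigr => i' _.
  rewrite (bigD1 j) //= big1 ?addr0; first by rewrite mxE eqxx mulr1.
  by move=> j' hj'; rewrite mxE eq_sym (negbTE hj') mulr0 mul0r.
split=> [j c|k j c].
  have := key ord0 j c; rewrite big_ord_recl /LR /MR cast_top cast_top mul1mx.
  rewrite hSb blk00 mxE mul0r add0r => <-; apply: eq_bigr => k _.
  by rewrite blk0l cast_bot.
have := key (lift ord0 k) j c.
rewrite big_ord_recl /LR /MR cast_top cast_bot hP [X in _ = X -> _]mxE tens_mul_entry hSb blkl0.
under eq_bigr do rewrite blkll cast_bot -/D.
have -> : \sum_(i' < m) \sum_(j' < n) (1%:M : 'M[R]_m) k i' * A j j' * D (mxtens_index (i', j')) c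
   = \sum_(j' < n) A j j' * D (mxtens_index (k, j')) c.
  rewrite (bigD1 k) //= [X in _ + X]big1 ?addr0.
    by apply: eq_bigr => j' _; rewrite mxE eqxx mul1r.
  by move=> i' hi; apply: big1 => j' _; rewrite mxE eq_sym (negbTE hi) mul0r mul0r.
move=> h; rewrite -[LHS]opprK -h opprD -sumrN !mxE mulNr opprK; congr (_ + _).
by apply: eq_bigr => i _; rewrite mxE mulNr opprK.
Qed.
End Ext.


Section Real.
Variable R : realType.

Lemma char_poly_tr m (M : 'M[R]_m) : char_poly M^T = char_poly M.
Proof.
rewrite /char_poly -det_tr; congr (\det _); apply/matrixP => i j.
by rewrite !mxE eq_sym.
Qed.

Definition sco m (l : 'M[R]_(1, m)) (M : 'M[R]_m) a := (l *m pw M^T a *m l^T) 0 0.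
Definition pt m (l : 'M[R]_(1, m)) (M : 'M[R]_m) : {poly R} :=
  \sum_(i < size (char_poly M)) (char_poly M)`_i *:
     \sum_(a < i) sco l M a *: 'X^(i.-1 - a).

Lemma gpeval_pt k m (A : 'M[R]_k) (l : 'M[R]_(1, m)) (M : 'M[R]_m) :
  gpeval A (pt l M) = \sum_(i < size (char_poly M)) (char_poly M)`_i *:
     \sum_(a < i) sco l M a *: pw A (i.-1 - a).
Proof.
rewrite /pt gpeval_sum; apply: eq_bigr => i _; rewrite gpevalZ gpeval_sum.
by congr (_ *: _); apply: eq_bigr => a _; rewrite gpevalZ gpevalXn.
Qed.

Lemma entry_col n p (Y : 'M[R]_(n, p)) j c : Y j c = (Y *m delta_mx c (0 : 'I_1)) j 0.
Proof.
rewrite mxE (bigD1 c) //= big1 ?addr0; first by rewrite mxE !eqxx mulr1.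
by move=> c' hc; rewrite mxE (negbTE hc) mulr0.
Qed.

Lemma real_main n m (A B : 'M[R]_n) (D : 'M[R]_(m * n, n)) (l : 'M[R]_(1, m)) (M : 'M[R]_m) :
  (forall j c, B j c = \sum_(k < m) l 0 k * D (mxtens_index (k, j)) c) ->
  (forall k j c, \sum_(j' < n) A j j' * D (mxtens_index (k, j')) c =
     l 0 k * (1%:M : 'M[R]_n) j c + \sum_(k' < m) M k k' * D (mxtens_index (k', j)) c) ->
  gpeval A (char_poly M) *m B = gpeval A (pt l M).
Proof.
move=> hB hA; apply/matrixP => j c; rewrite [LHS]entry_col [RHS]entry_col.
set e : 'cV[R]_n := delta_mx c (0 : 'I_1).
suff -> : gpeval A (char_poly M) *m B *m e = gpeval A (pt l M) *m e by [].
pose X : 'M[R]_(n, m) := \matrix_(j, k) D (mxtens_index (k, j)) c.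
have hX : A *m X = e *m l + X *m M^T.
  apply/matrixP => j' k; rewrite /X /e !mxE big_ord1. under eq_bigr do rewrite mxE. rewrite hA. under [in RHS]eq_bigr do rewrite !mxE.
  congr (_ + _); last by apply: eq_bigr => k' _; rewrite mulrC.
  by rewrite mulrC !mxE eqxx andbT.
have heB : B *m e = X *m l^T.
  apply/matrixP => j' u; rewrite ord1 -entry_col hB /X !mxE; apply: eq_bigr => k _.
  by rewrite !mxE mulrC.
rewrite -mulmxA heB mulmxA (sylv_eval hX); last by rewrite -(char_poly_tr M) gpeval_CH.
rewrite gpeval_pt !mulmx_suml; apply: eq_bigr => i _.
rewrite -!scalemxAl !mulmx_suml; congr (_ *: _); apply: eq_bigr => a _.
rewrite -scalemxAl -!mulmxA [l *m _]mx11_scalar mul_mx_scalar mulmxA /sco.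
by rewrite -scalemxAr.
Qed.
End Real.


Lemma char_poly_trK (K : comNzRingType) m (M : 'M[K]_m) : char_poly M^T = char_poly M.
Proof.
rewrite /char_poly -det_tr; congr (\det _); apply/matrixP => i j.
by rewrite !mxE eq_sym.
Qed.

Lemma pw_scalar (K : comNzRingType) (z : K) i : pw (z%:M : 'M[K]_1) i = (z ^+ i)%:M.
Proof. by elim: i => [|i IH]; rewrite ?expr0 // pwS IH -scalar_mxM exprS. Qed.

Lemma gpeval_scalar (K : comNzRingType) (z : K) (p : {poly K}) :
  gpeval (z%:M : 'M[K]_1) p = (p.[z])%:M.
Proof.
rewrite /gpeval horner_coef raddf_sum /=; apply: eq_bigr => i _.
by rewrite pw_scalar scale_scalar_mx.
Qed.

Section Cplx.
Variable R : realType.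
Local Notation C := R[i].

Lemma cmxE p q (A : 'M[R]_(p, q)) : cmx A = map_mx (real_complex R) A. Proof. by []. Qed.
Lemma cpolyE (p : {poly R}) : cpoly p = map_poly (real_complex R) p. Proof. by []. Qed.

Lemma map_pw k (A : 'M[R]_k) a : map_mx (real_complex R) (pw A a) = pw (map_mx (real_complex R) A) a.
Proof. by elim: a => [|a IH]; rewrite ?map_mx1 // !pwS map_mxM IH. Qed.

Lemma size_cpoly (p : {poly R}) : size (cpoly p) = size p.
Proof. rewrite cpolyE size_map_inj_poly //; exact: complexI. Qed.

Lemma rep m (l : 'M[R]_(1, m)) (M : 'M[R]_m) (z : C) : (z%:M - cmx M) \in unitmx ->
  (cpoly (pt l M)).[z] = (cpoly (char_poly M)).[z] * fLM l M z.
Proof.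
move=> hu; set N := cmx M^T.
have hNT : z%:M - N = (z%:M - cmx M)^T by rewrite /N !cmxE linearB /= tr_scalar_mx map_trmx.
have hU : (z%:M - N) \in unitmx by rewrite hNT unitmx_tr.
set y := cmx l *m invmx (z%:M - N).
have hy : (z%:M : 'M[C]_1) *m y = 1%:M *m cmx l + y *m N.
  rewrite mul1mx mul_scalar_mx.
  have <- : y *m (z%:M - N) = cmx l by rewrite /y mulmxKV.
  by rewrite mulmxBr mul_mx_scalar subrK.
have hq : gpeval N (cpoly (char_poly M)) = 0.
  rewrite cpolyE map_char_poly -cmxE /N cmxE -map_trmx -cmxE. by rewrite -char_poly_trK gpeval_CH.
have := sylv_eval hy hq => /(congr1 (fun Y => (Y *m (cmx l)^T) 0 0)).
rewrite gpeval_scalar -mulmxA mul_scalar_mx mxE.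
have -> : (y *m (cmx l)^T) 0 0 = fLM l M z.
  rewrite /fLM [RHS](_ : _ = ((cmx l *m invmx (z%:M - cmx M) *m (cmx l)^T)^T) 0 0);
    last by rewrite [RHS]mxE.
  by rewrite !trmx_mul trmxK trmx_inv -hNT mulmxA.
move=> ->.
rewrite cpolyE /pt rmorph_sum horner_sum size_cpoly mulmx_suml summxE.
apply: eq_bigr => i _.
rewrite -[LHS]/((map_poly (real_complex R) ((char_poly M)`_i *: \sum_(a < i) sco l M a *: 'X^(i.-1 - a))).[z]).
rewrite (map_polyZ (real_complex R)) hornerZ -scalemxAl mxE -cpolyE cpolyE coef_map /=; congr (_ * _).
rewrite rmorph_sum horner_sum mulmx_suml summxE; apply: eq_bigr => a _.
rewrite -[LHS]/((map_poly (real_complex R) (sco l M a *: 'X^(i.-1 - a))).[z]) map_polyZ hornerZ map_polyXn hornerXn pw_scalar mulmx1 -!mulmxA mul_scalar_mx mxE mulrC.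
congr (_ * _).
by rewrite /sco /N !cmxE map_trmx -(map_pw M^T a) -!map_mxM mulmxA [RHS]mxE.
Qed.
End Cplx.


Lemma hchar (K : comNzRingType) k (A : 'M[K]_k) z : (char_poly A).[z] = \det (z%:M - A).
Proof.
rewrite /char_poly -[LHS]/(horner_eval z (\det (char_poly_mx A))) -det_map_mx.
congr (\det _); apply/matrixP => i j; rewrite !mxE /= /horner_eval.
by rewrite hornerD hornerN hornerMn hornerX hornerC.
Qed.

Section C5.
Variable R : realType.
Local Notation C := R[i].

Lemma qdet m (M : 'M[R]_m) (z : C) : (cpoly (char_poly M)).[z] = \det (z%:M - cmx M).
Proof. by rewrite cpolyE map_char_poly hchar. Qed.

Lemma unit_q m (M : 'M[R]_m) (z : C) :
  ((z%:M - cmx M) \in unitmx) = ((cpoly (char_poly M)).[z] != 0).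
Proof. by rewrite unitmxE unitfE qdet. Qed.

Lemma conjcE (x : C) : conjc x = x^*.
Proof.
case: x => a b.
rewrite [in RHS](_ : (a +i* b)%C = real_complex R a + 'i * real_complex R b); last first.
  by rewrite -complexiE; simpc.
rewrite conjC_rect; first by rewrite -complexiE; simpc.
  by apply/complex_realP; exists a.
by apply/complex_realP; exists b.
Qed.

Lemma conj_cpoly (p : {poly R}) (w : C) : ((cpoly p).[w])^* = (cpoly p).[w^*].
Proof.
rewrite -horner_map /=; congr (_.[_]).
rewrite cpolyE -map_poly_comp; apply: eq_map_poly => r /=.
by apply: conj_Creal; apply/complex_realP; exists r.
Qed.

Lemma cmx_real p q (A : 'M[R]_(p, q)) i j : (cmx A i j)^* = cmx A i j.
Proof. by rewrite mxE; apply: conj_Creal; apply/complex_realP; exists (A i j). Qed.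

Lemma cmx_skew m (M : 'M[R]_m) i j : M = - M^T -> cmx M i j = - cmx M j i.
Proof. by move=> hM; rewrite !mxE {1}hM !mxE rmorphN. Qed.

Lemma conjM (x y : C) : (x * y)^* = x^* * y^*. Proof. exact: rmorphM. Qed.
Lemma conj_sum (I : finType) (F : I -> C) : (\sum_i F i)^* = \sum_i (F i)^*.
Proof. exact: rmorph_sum. Qed.

Definition rs m (u : 'rV[C]_m) := \sum_i u 0 i * (u 0 i)^*.
Definition ss m (u : 'rV[C]_m) (M : 'M[C]_m) := \sum_i \sum_j u 0 i * M i j * (u 0 j)^*.

Lemma skew_eig m (M : 'M[R]_m) (z : C) : M = - M^T -> eigenvalue (cmx M) z -> z + z^* = 0.
Proof.
move=> hM /eigenvalueP [u hu nz].
have hj : forall j, \sum_i u 0 i * cmx M i j = z * u 0 j.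
  by move=> j; have := congr1 (fun X : 'M[C]_(1, m) => X 0 j) hu; rewrite [LHS]mxE [RHS]mxE.
have h1 : ss u (cmx M) = z * rs u.
  rewrite /ss exchange_big /rs mulr_sumr; apply: eq_bigr => j _.
  by rewrite -mulr_suml hj mulrA.
have h2 : (ss u (cmx M))^* = - ss u (cmx M).
  rewrite /ss [in RHS]exchange_big -sumrN conj_sum; apply: eq_bigr => j _.
  rewrite conj_sum -sumrN; apply: eq_bigr => i _.
  rewrite !conjM conjCK cmx_real (cmx_skew _ _ hM). by ring.
have h3 : (rs u)^* = rs u.
  by rewrite /rs conj_sum; apply: eq_bigr => i _; rewrite conjM conjCK mulrC.
have hr : rs u != 0.
  apply: contraNneq nz => hr0; apply/eqP/rowP => i; rewrite mxE.
  have := psumr_eq0P (fun i _ => mul_conjC_ge0 (u 0 i)) hr0 (i := i) isT.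
  by move/eqP; rewrite mul_conjC_eq0 => /eqP.
have : (z + z^*) * rs u = 0.
  by rewrite mulrDl -h1 -h3 -conjM -h1 h2 subrr.
by move/eqP; rewrite mulf_eq0 (negbTE hr) orbF => /eqP.
Qed.

Lemma map_gpeval k (A : 'M[R]_k) (p : {poly R}) :
  cmx (gpeval A p) = gpeval (cmx A) (cpoly p).
Proof.
rewrite /gpeval size_cpoly !cmxE map_mx_sum; apply: eq_bigr => i _.
by rewrite map_mxZ map_pw cpolyE coef_map.
Qed.

Lemma qA_unit n m (A : 'M[R]_n) (M : 'M[R]_m) :
  lyap_regular A -> M = - M^T -> gpeval A (char_poly M) \in unitmx.
Proof.
case: n A => [|n] A hL hM; first by rewrite unitmxE det_mx00 unitr1.
rewrite -(map_unitmx (real_complex R)) -cmxE map_gpeval gpeval_horner.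
have hqc : cpoly (char_poly M) = char_poly (cmx M) by rewrite cpolyE map_char_poly.
have [rs hrs] := closed_field_poly_normal (char_poly (cmx M)).
move: hrs; rewrite (monicP (char_poly_monic _)) scale1r => hrs.
rewrite hqc hrs rmorph_prod unitmxE unitfE.
rewrite (big_morph _ (@det_mulmx _ _) (@det1 _ _)) prodf_seq_neq0.
apply/allP => x hx /=; rewrite rmorphB /= horner_mx_X horner_mx_C.
have hxM : eigenvalue (cmx M) x by rewrite eigenvalue_root_char hrs root_prod_XsubC.
have h0 := skew_eig hM hxM.
apply/negP => /eqP hdet.
have hxA : eigenvalue (cmx A) x.
  rewrite eigenvalue_root_char /root hchar.
  have -> : x%:M - cmx A = (-1) *: (cmx A - x%:M) by rewrite scaleN1r opprB.
  by rewrite detZ hdet mulr0.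
by have := hL x x hxA hxA; rewrite h0 eqxx.
Qed.

Lemma ss_skew m (u : 'rV[C]_m) (Mc : 'M[C]_m) :
  (forall i j, (Mc i j)^* = Mc i j) -> (forall i j, Mc i j = - Mc j i) ->
  (ss u Mc)^* = - ss u Mc.
Proof.
move=> hr hs.
rewrite /ss [in RHS]exchange_big -sumrN conj_sum; apply: eq_bigr => j _.
rewrite conj_sum -sumrN; apply: eq_bigr => i _.
by rewrite !conjM conjCK hr (hs j i); ring.
Qed.

Lemma rs_ge0 m (u : 'rV[C]_m) : 0 <= rs u.
Proof. by apply: sumr_ge0 => i _; apply: mul_conjC_ge0. Qed.

Lemma pos_abs m (cl : 'rV[C]_m) (Mc : 'M[C]_m) (z : C) :
  (forall i, (cl 0 i)^* = cl 0 i) -> (forall i j, (Mc i j)^* = Mc i j) ->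
  (forall i j, Mc i j = - Mc j i) -> 0 < 'Re z -> (z%:M - Mc) \in unitmx ->
  0 <= 'Re ((cl *m invmx (z%:M - Mc) *m cl^T) 0 0).
Proof.
move=> hl hr hs hz hu.
set x := invmx (z%:M - Mc) *m cl^T.
have hx : (z%:M - Mc) *m x = cl^T by rewrite /x mulKVmx.
have hc : forall i, cl 0 i = z^* * (x i 0)^* - \sum_j Mc i j * (x j 0)^*.
  move=> i; rewrite -hl.
  have -> : cl 0 i = (cl^T) i 0 by rewrite mxE.
  rewrite -hx mulmxBl mul_scalar_mx !mxE.
  rewrite rmorphB /= conjM conj_sum; congr (_ - _).
  by rewrite conj_sum; apply: eq_bigr => j _; rewrite conjM hr.
have hf : (cl *m x) 0 0 = z^* * rs x^T - ss x^T Mc.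
  rewrite mxE /rs /ss mulr_sumr -sumrB; apply: eq_bigr => i _.
  rewrite hc !mxE mulrBl mulr_suml; congr (_ - _); first by ring.
  by apply: eq_bigr => j _; rewrite !mxE; ring.
rewrite -mulmxA -/x hf raddfB /=.
have -> : 'Re (ss x^T Mc) = 0.
  by rewrite ReE ss_skew // subrr mul0r.
rewrite subr0 ReMr ?Re_conj; last exact: ger0_real (rs_ge0 _).
by apply: mulr_ge0; [exact: ltW | exact: rs_ge0].
Qed.
End C5.


Section C6.
Variable R : realType.
Local Notation C := R[i].

Lemma odd_abs m (cl : 'rV[C]_m) (Mc : 'M[C]_m) (z : C) : Mc^T = - Mc ->
  (z%:M - Mc) \in unitmx ->
  ((-z)%:M - Mc) \in unitmx /\
  (cl *m invmx ((-z)%:M - Mc) *m cl^T) 0 0 = - (cl *m invmx (z%:M - Mc) *m cl^T) 0 0.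
Proof.
move=> hT hu.
have hE : (-z)%:M - Mc = (-1) *: (z%:M - Mc)^T.
  rewrite linearB /= tr_scalar_mx hT scaleN1r opprB. by rewrite raddfN addrC.
have hN1 : (-1 : C) \is a GRing.unit by rewrite unitrN1.
have hu' : ((-z)%:M - Mc) \in unitmx by rewrite hE unitmxZ // unitmx_tr.
split=> //.
rewrite hE invmxZ -?hE // invrN1 -trmx_inv scaleN1r mulmxN mulNmx.
have oppE : forall X : 'M[C]_1, (- X) 0 0 = - X 0 0 by move=> X; rewrite mxE.
rewrite oppE; congr (- _).
rewrite [RHS](_ : _ = ((cl *m invmx (z%:M - Mc) *m cl^T)^T) 0 0); last by rewrite [RHS]mxE.
by rewrite !trmx_mul trmxK mulmxA.
Qed.

Lemma cmx_tr m (M : 'M[R]_m) : M = - M^T -> (cmx M)^T = - cmx M.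
Proof.
move=> hM; rewrite !cmxE map_trmx.
have -> : M^T = - M by rewrite {2}hM opprK.
by rewrite map_mxN.
Qed.

Lemma conjN (x : C) : (- x)^* = - x^*. Proof. exact: rmorphN. Qed.
Lemma conj_div (x y : C) : (x / y)^* = x^* / y^*. Proof. exact: fmorph_div. Qed.
End C6.

Unset Implicit Arguments. Set Strict Implicit. Set Printing Implicit Defensive.

Theorem lemma6p5 (R : realType) (n m : nat) (A B : 'M[R]_n)
  (H : 'M[R]_m) (Cs : 'I_m -> 'M[R]_n) (P : 'M[R]_m)
  (S : 'M[R]_(1 + m)) (l : 'M[R]_(1, m)) (M : 'M[R]_m) :
  lyap_regular A ->
  CL A B -> bicommutant A B ->
  minimal_hill_rep A B H Cs ->
  P \in unitmx -> H = P^T *m P ->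
  S^T = - S ->
  (forall Rm : 'M[R]_n, (S *t (1%:M : 'M[R]_n)) *m LR P Cs Rm = MR A B P Cs Rm) ->
  S = block_mx 0 l (- l^T) (- M) ->
  M = - M^T ->
  in_PRO (fLM l M) (domLM M) /\ rat_at_matrix (fLM l M) (domLM M) A B.
Proof.
move=> hL _ _ _ _ _ _ hS hSb hM.
have [hB hA] := extract hS hSb.
have hq0 : char_poly M != 0 := monic_neq0 (char_poly_monic M).
have hfz : forall z, (z%:M - cmx M) \in unitmx ->
    fLM l M z = (cpoly (pt l M)).[z] / (cpoly (char_poly M)).[z].
  move=> z hz; rewrite rep // [_ * fLM _ _ _]mulrC mulfK //; by rewrite -unit_q.
have hrep : rat_represents (fLM l M) (domLM M) (pt l M) (char_poly M).
  by split=> // z hz _; rewrite hfz.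
split.
  exists (pt l M), (char_poly M); split => //; split => //; split.
    move=> z hz hqz; have hu : (z%:M - cmx M) \in unitmx by rewrite unit_q.
    rewrite -hfz //; apply: pos_abs => //.
    - by move=> i; rewrite cmx_real.
    - by move=> i j; rewrite cmx_real.
    - by move=> i j; rewrite (cmx_skew _ _ hM).
  move=> z hqz hqw; have hu : (z%:M - cmx M) \in unitmx by rewrite unit_q.
  have [hu' hodd] := odd_abs (cmx l) (cmx_tr hM) hu.
  rewrite conjcE conj_div !conj_cpoly conjN conjCK -hfz // -hfz //.
exists (pt l M), (char_poly M); split => //; split; first exact: qA_unit.
have hQ := qA_unit hL hM.
have hqb := real_main hB hA.
change (gpeval A (pt l M) *m invmx (gpeval A (char_poly M)) = B).
have hB' : B = invmx (gpeval A (char_poly M)) *m gpeval A (pt l M).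
  by rewrite -hqb mulmxA mulVmx // mul1mx.
rewrite hB' -{1}[gpeval A (pt l M) *m _]mul1mx -(mulVmx hQ) -!mulmxA.
by rewrite (mulmxA (gpeval A (char_poly M))) (gpeval_comm A (char_poly M)) -mulmxA mulmxV // mulmx1.
Qed.
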